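(* Let $\mathcal P$ be a solvable finite-dimensional Poisson $n$-Lie algebra of dimension $m$ over an algebraically closed field of characteristic zero. Then there is a chain of ideals $0=\mathcal P_0\subset\mathcal P_1\subset\cdots\subset\mathcal P_m=\mathcal P$ with $\dim\mathcal P_i=i$ for all $i$.
   Context: A Poisson $n$-Lie algebra is a commutative associative algebra $(\mathcal P,\cdot)$ with an $n$-linear skew-symmetric bracket satisfying the fundamental identity $[x_1,\dots,x_{n-1},[y_1,\dots,y_n]]=\sum_{i=1}^n[y_1,\dots,[x_1,\dots,x_{n-1},y_i],\dots,y_n]$ and the Leibniz rule $[y\cdot z,x_2,\dots,x_n]=y\cdot[z,x_2,\dots,x_n]+z\cdot[y,x_2,\dots,x_n]$. An ideal is a subspace $\mathcal I$ with $\mathcal P\cdot\mathcal I\subseteq\mathcal I$ and $[\mathcal I,\mathcal P,\dots,\mathcal P]\subseteq\mathcal I$. $\mathcal P$ is solvable if $\mathcal P^{(s)}=0$ for some $s$, where $\mathcal P^{(1)}=\mathcal P$, $\mathcal P^{(k+1)}=[\mathcal P^{(k)},\mathcal P^{(k)},\mathcal P,\dots,\mathcal P]+\mathcal P^{(k)}\cdot\mathcal P^{(k)}$ (linear spans). *)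

(* Defs.v *)
From HB Require Import structures.
From mathcomp Require Import all_boot all_order all_algebra.
Set Implicit Arguments. Unset Strict Implicit. Unset Printing Implicit Defensive.
Import GRing.Theory.
Local Open Scope ring_scope.


Section PoissonNLie.
Variables (F : fieldType) (V : vectType F) (n : nat).
Variables (mul : V -> V -> V) (brk : {ffun 'I_n -> V} -> V).

Definition upd (x : {ffun 'I_n -> V}) (i : 'I_n) (u : V) : {ffun 'I_n -> V} :=
  [ffun j => if j == i then u else x j].

Definition comm_assoc_algebra : Prop :=
  [/\ forall (a : F) x y z, mul (a *: x + y) z = a *: mul x z + mul y z,
      forall x y, mul x y = mul y x &
      forall x y z, mul x (mul y z) = mul (mul x y) z].

Definition multilinear : Prop :=
  forall (x : {ffun 'I_n -> V}) (i : 'I_n) (a : F) (u v : V),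
    brk (upd x i (a *: u + v)) = a *: brk (upd x i u) + brk (upd x i v).

Definition skew_symmetric : Prop :=
  forall (x : {ffun 'I_n -> V}) (i j : 'I_n), i != j ->
    brk [ffun k => x (if k == i then j else if k == j then i else k)] = - brk x.

(* [x_1,...,x_{n-1},[y_1,...,y_n]] = sum_i [y_1,...,[x_1,...,x_{n-1},y_i],...,y_n];
   the last (index n-1) entry of x is irrelevant (it gets replaced). *)
Definition fundamental_identity : Prop :=
  forall (x y : {ffun 'I_n -> V}) (l : 'I_n), val l = n.-1 ->
    brk (upd x l (brk y)) = \sum_(i < n) brk (upd y i (brk (upd x l (y i)))).

Definition leibniz_rule : Prop :=
  forall (x : {ffun 'I_n -> V}) (i0 : 'I_n), val i0 = 0%N ->
    forall y z, brk (upd x i0 (mul y z)) =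
                mul y (brk (upd x i0 z)) + mul z (brk (upd x i0 y)).

Definition poisson_nlie : Prop :=
  [/\ comm_assoc_algebra, multilinear, skew_symmetric,
      fundamental_identity & leibniz_rule].

Definition is_ideal (I : {vspace V}) : Prop :=
  (forall p u, u \in I -> mul p u \in I) /\
  (forall (x : {ffun 'I_n -> V}) (i0 : 'I_n), val i0 = 0%N ->
     forall u, u \in I -> brk (upd x i0 u) \in I).

Definition is_span (S : V -> Prop) (W : {vspace V}) : Prop :=
  (forall v, S v -> v \in W) /\
  (forall U : {vspace V}, (forall v, S v -> v \in U) -> (W <= U)%VS).

(* generators of P^(k+1) from W = P^(k):
   [a, b, x_3, ..., x_n] with a, b in W, and a.b with a, b in W *)
Definition derived_gens (W : {vspace V}) (v : V) : Prop :=
  (exists x : {ffun 'I_n -> V},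
      (forall i : 'I_n, (val i < 2)%N -> x i \in W) /\ v = brk x) \/
  (exists a b, [/\ a \in W, b \in W & v = mul a b]).

Definition derived_series (D : nat -> {vspace V}) : Prop :=
  D 1%N = fullv /\ forall k, (0 < k)%N -> is_span (derived_gens (D k)) (D k.+1).

Definition solvable_pnlie : Prop :=
  exists D : nat -> {vspace V}, derived_series D /\
    exists s, (0 < s)%N /\ D s = 0%VS.

End PoissonNLie.

(* Main.v *)
Require Import Defs.
From HB Require Import structures.
From mathcomp Require Import all_boot all_order all_algebra.
From Stdlib Require Import ClassicalEpsilon Classical.
From mathcomp Require Import zify.
Set Implicit Arguments. Unset Strict Implicit. Unset Printing Implicit Defensive.
Import GRing.Theory.
Local Open Scope ring_scope.

Section SpanTools.
Variables (K : fieldType) (vT : vectType K).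

Definition lclosed (P : vT -> Prop) :=
  P 0 /\ forall a x y, P x -> P y -> P (a *: x + y).

Lemma span_seq_ind (P : vT -> Prop) (s : seq vT) :
  lclosed P -> (forall x, x \in s -> P x) -> forall v, v \in <<s>>%VS -> P v.
Proof.
move=> [P0 PD] Ps v vs.
rewrite (@coord_span _ _ _ (in_tuple s) v vs).
apply: (big_ind P) => //.
  by move=> x y Px Py; rewrite -[x]scale1r; apply: PD.
move=> i _; rewrite -[_ *: _]addr0; apply: PD => //.
by apply: Ps; rewrite mem_nth // size_tuple.
Qed.

Definition spanning (Q : vT -> Prop) (s : seq vT) :=
  (forall x, x \in s -> Q x) /\ (forall v, Q v -> v \in <<s>>%VS).

Lemma spanning_ex Q : exists s, spanning Q s.
Proof.
suff H : forall N s, (forall x, x \in s -> Q x) ->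
    (\dim {:vT} - \dim <<s>>%VS <= N)%N -> exists s', spanning Q s'.
  apply: (H (\dim {:vT}) [::]); last exact: leq_subr.
  by [].
elim=> [|N IH] s sQ hN.
  case: (classic (forall v, Q v -> v \in <<s>>%VS)) => [h|h]; first by exists s.
  have [v hv] := not_all_ex_not _ _ h.
  have Qv := not_imply_elim _ _ hv; have nv := not_imply_elim2 _ _ hv.
  exfalso.
  have sub : (<<s>> <= <<v :: s>>)%VS by rewrite span_cons addvSr.
  have := dimv_leqif_sup sub; move/ltn_leqif.
  have -> : (<<v :: s>> <= <<s>>)%VS = false.
    apply/negP => /subvP /(_ v); rewrite span_cons => h'.
    apply: nv; apply: h'.
    by have := memv_add (memv_line v) (mem0v <<s>>%VS); rewrite addr0.
  move=> /= hlt.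
  have := dimvS (subvf <<v :: s>>).
  move: hN; rewrite leqn0 subn_eq0 => hN hle.
  have := leq_trans hlt hle; rewrite ltnNge hN //.
case: (classic (forall v, Q v -> v \in <<s>>%VS)) => [h|h]; first by exists s.
have [v hv] := not_all_ex_not _ _ h.
  have Qv := not_imply_elim _ _ hv; have nv := not_imply_elim2 _ _ hv.
apply: (IH (v :: s)).
  by move=> x; rewrite inE => /orP[/eqP->|]; [|apply: sQ].
have sub : (<<s>> <= <<v :: s>>)%VS by rewrite span_cons addvSr.
have := dimv_leqif_sup sub; move/ltn_leqif.
have -> : (<<v :: s>> <= <<s>>)%VS = false.
  apply/negP => /subvP /(_ v); rewrite span_cons => h'.
  apply: nv; apply: h'.
    by have := memv_add (memv_line v) (mem0v <<s>>%VS); rewrite addr0.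
move=> /= hlt.
have := dimvS (subvf <<v :: s>>).
move: hN => hN hle.
lia.
Qed.

Definition vspan (Q : vT -> Prop) : {vspace vT} :=
  <<proj1_sig (constructive_indefinite_description _ (spanning_ex Q))>>%VS.

Lemma vspan_spanning Q :
  spanning Q (proj1_sig (constructive_indefinite_description _ (spanning_ex Q))).
Proof. exact: proj2_sig. Qed.

Lemma vspan_sub Q v : Q v -> v \in vspan Q.
Proof. by move=> Qv; apply: (proj2 (vspan_spanning Q)). Qed.

Lemma vspan_min Q (U : {vspace vT}) :
  (forall v, Q v -> v \in U) -> (vspan Q <= U)%VS.
Proof.
move=> h; apply/span_subvP => x xs; apply: h.
exact: (proj1 (vspan_spanning Q)).
Qed.

Lemma vspan_closed (P : vT -> Prop) v : lclosed P -> v \in vspan P -> P v.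
Proof.
move=> cP; apply: (span_seq_ind cP).
exact: (proj1 (vspan_spanning P)).
Qed.

Lemma span_ind (Q : vT -> Prop) (W : {vspace vT}) (P : vT -> Prop) :
  (forall U : {vspace vT}, (forall v, Q v -> v \in U) -> (W <= U)%VS) ->
  lclosed P -> (forall v, Q v -> P v) -> forall v, v \in W -> P v.
Proof.
move=> hmin cP QP v vW; apply: (vspan_closed cP).
have /subvP := hmin (vspan P) (fun v Qv => vspan_sub (QP v Qv)).
by apply.
Qed.

Lemma vspan_ind (Q P : vT -> Prop) :
  lclosed P -> (forall v, Q v -> P v) -> forall v, v \in vspan Q -> P v.
Proof. by move=> cP QP; apply: (span_ind (@vspan_min Q)). Qed.

Lemma lclosed_mem (U : {vspace vT}) : lclosed (fun v => v \in U).
Proof. by split; [exact: mem0v | move=> a x y hx hy; rewrite memvD ?memvZ]. Qed.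

End SpanTools.

Section NilTrace.
Variable F : closedFieldType.

Lemma eig_pow r (M : 'M[F]_r) (v : 'rV_r) z e :
  v *m M = z *: v -> v *m M ^+ e = z ^+ e *: v.
Proof.
move=> h; elim: e => [|e IH]; first by rewrite expr0 mulmx1 expr0 scale1r.
by rewrite exprS -mulmxE mulmxA h -scalemxAl IH scalerA -exprS.
Qed.

Lemma tr_nilpotent r (M : 'M[F]_r) e : M ^+ e = 0 -> \tr M = 0.
Proof.
case: r M => [|r] M hM; first by rewrite /mxtrace big_ord0.
have [s hs] := closed_field_poly_normal (char_poly M).
have mon := char_poly_monic M.
rewrite (monicP mon) scale1r in hs.
have s0 : forall z, z \in s -> z = 0.
  move=> z zs.
  have : root (char_poly M) z by rewrite hs root_prod_XsubC.
  rewrite -eigenvalue_root_char => /eigenvalueP [v hv vn0].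
  have := eig_pow e hv; rewrite hM mulmx0 => /esym /eqP.
  rewrite scaler_eq0 (negbTE vn0) orbF expf_eq0 => /andP[_ /eqP //].
have hs' : char_poly M = 'X^(size s).
  rewrite hs (eq_big_seq (fun _ => 'X)); last first.
    by move=> z zs; rewrite (s0 z zs) subr0.
  by rewrite big_const_seq count_predT iter_mulr_1.
have szs : size s = r.+1.
  have := size_char_poly M; rewrite hs' size_polyXn => -[] //.
have := char_poly_trace M (ltn0Sn r); rewrite hs' szs coefXn /=.
rewrite eqn_leq ltnn /= => h0; apply/eqP; rewrite -oppr_eq0 -h0.
by rewrite andbF.
Qed.

Lemma eigenvalue_closedF n (A : 'M[F]_n) : (n > 0)%N -> exists a, eigenvalue A a.
Proof.
move=> n_gt0; have /closed_rootP [a rAa] : size (char_poly A) != 1%N.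
  by rewrite size_char_poly; case: (n) n_gt0.
by exists a; rewrite eigenvalue_root_char.
Qed.

Lemma common_eigenvectorF n (As : seq 'M[F]_n) :
  (n > 0)%N -> {in As &, forall A B, comm_mx A B} ->
  exists2 v : 'rV_n, v != 0 & all (fun A => stablemx v A) As.
Proof.
move=> n_gt0 /all_comm_mxP; have [k sAsk] := ubnP (size As).
elim: k n n_gt0 As sAsk => [//|k IHk]  n n_gt0 [|A As].
  exists (const_mx 1) => //; apply/negP => /eqP/rowP/(_ (Ordinal n_gt0)).
  by rewrite !mxE => /eqP; rewrite oner_eq0.
rewrite ltnS all_comm_mx_cons => sAsk /andP[].
move=> /allP/(_ _ _)/eqP/= A_comm /all_comm_mxP As_comm.
have [a a_eigen] := eigenvalue_closedF A n_gt0.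
have [] := IHk _ _ [seq restrictmx (eigenspace A a) B | B <- As].
- by rewrite lt0n mxrank_eq0.
- by rewrite size_map.
- apply/all_comm_mxP; move=> _ _ /= /mapP /= [B B_in ->] /mapP /= [B' B'_in ->].
  rewrite -?conjmxM ?inE ?stablemx_row_base ?comm_mx_stable_eigenspace//;
  by [rewrite As_comm | apply: As_comm | apply: A_comm].
move=> v vN0 /allP /= vP; exists (v *m (row_base (eigenspace A a))).
  by rewrite mulmx_free_eq0 ?row_base_free.
apply/andP; split.
  by apply/eigenvectorP; exists a; rewrite mulmx_sub // eq_row_base.
apply/allP => B B_in; rewrite -stablemx_restrict ?vP //.
  by apply/mapP; exists B.
by rewrite comm_mx_stable_eigenspace //; exact: A_comm.
Qed.

End NilTrace.

Section LieDefs.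
Variable F : fieldType.

Definition comm d (a b : 'M[F]_d) := a *m b - b *m a.
Definition lie d (L : {vspace 'M[F]_d}) :=
  forall a b, a \in L -> b \in L -> comm a b \in L.
Definition derived d (L : {vspace 'M[F]_d}) :=
  vspan (fun c => exists a b, [/\ a \in L, b \in L & c = comm a b]).

Lemma commN d (a b : 'M[F]_d) : comm b a = - comm a b.
Proof. by rewrite /comm opprB. Qed.

Lemma comm0l d (b : 'M[F]_d) : comm 0 b = 0.
Proof. by rewrite /comm mul0mx mulmx0 subrr. Qed.

Lemma commDl d c (x y b : 'M[F]_d) :
  comm (c *: x + y) b = c *: comm x b + comm y b.
Proof.
rewrite /comm mulmxDl mulmxDr -scalemxAl -scalemxAr scalerBr.
by rewrite addrACA opprD.
Qed.

Lemma comm0r d (b : 'M[F]_d) : comm b 0 = 0.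
Proof. by rewrite commN comm0l oppr0. Qed.

Lemma commDr d c (x y b : 'M[F]_d) :
  comm b (c *: x + y) = c *: comm b x + comm b y.
Proof. by rewrite commN commDl (commN x) (commN y) opprD scalerN. Qed.

Lemma comm_span d (Q : 'M[F]_d -> Prop) (W T : {vspace 'M[F]_d}) :
  (forall U : {vspace 'M[F]_d}, (forall v, Q v -> v \in U) -> (W <= U)%VS) ->
  (forall a b, Q a -> Q b -> comm a b \in T) ->
  forall a b, a \in W -> b \in W -> comm a b \in T.
Proof.
move=> hmin hQ.
have h1 : forall b, Q b -> forall a, a \in W -> comm a b \in T.
  move=> b Qb; apply: (span_ind hmin).
    split; first by rewrite comm0l mem0v.
    by move=> c x y hx hy; rewrite commDl memvD ?memvZ.
  by move=> a Qa; apply: hQ.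
move=> a b aW; move: b; apply: (span_ind hmin).
  split; first by rewrite comm0r mem0v.
  by move=> c x y hx hy; rewrite commDr memvD ?memvZ.
by move=> b Qb; apply: h1.
Qed.

Lemma derivedP d (L : {vspace 'M[F]_d}) a b :
  a \in L -> b \in L -> comm a b \in derived L.
Proof. by move=> aL bL; apply: vspan_sub; exists a, b. Qed.

Lemma derived_min d (L T : {vspace 'M[F]_d}) :
  (forall a b, a \in L -> b \in L -> comm a b \in T) -> (derived L <= T)%VS.
Proof. by move=> h; apply: vspan_min => c [a [b [aL bL ->]]]; apply: h. Qed.

Lemma derived_sub d (L : {vspace 'M[F]_d}) : lie L -> (derived L <= L)%VS.
Proof. by move=> hL; apply: derived_min. Qed.

Lemma derived_mono d (L L' : {vspace 'M[F]_d}) :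
  (L <= L')%VS -> (derived L <= derived L')%VS.
Proof.
move=> /subvP h; apply: derived_min => a b aL bL.
by apply: derivedP; apply: h.
Qed.

Lemma lie_derived d (L : {vspace 'M[F]_d}) : lie L -> lie (derived L).
Proof.
move=> hL a b aK bK; have /subvP sKL := derived_sub hL.
by apply: derivedP; apply: sKL.
Qed.

Lemma lie_iter d k (L : {vspace 'M[F]_d}) : lie L -> lie (iter k (@derived d) L).
Proof. by move=> hL; elim: k => //= k IH; apply: lie_derived. Qed.

Lemma iter_sub d k (L : {vspace 'M[F]_d}) : lie L -> (iter k (@derived d) L <= L)%VS.
Proof.
move=> hL; elim: k => [|k IH] /=; first exact: subvv.
apply/subvP => x hx; apply: (subvP IH); exact: (subvP (derived_sub (lie_iter (k:=k) hL))).
Qed.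

End LieDefs.

Section Krylov.
Variable F : fieldType.

Lemma horner_mx_sum d (a : 'M[F]_d.+1) (p : {poly F}) :
  horner_mx a p = \sum_(i < size p) p`_i *: a ^+ i.
Proof.
rewrite -{1}(coefK p) poly_def rmorph_sum.
apply: eq_bigr => i _.
by rewrite -mul_polyC rmorphM /= horner_mx_C rmorphXn /= horner_mx_X -mulmxE mul_scalar_mx.
Qed.

Lemma conjmxD m n (V : 'M[F]_(m, n)) f g :
  conjmx V (f + g) = conjmx V f + conjmx V g.
Proof. by rewrite /conjmx mulmxDr mulmxDl. Qed.

Lemma conjmxN m n (V : 'M[F]_(m, n)) f : conjmx V (- f) = - conjmx V f.
Proof. by rewrite /conjmx mulmxN mulNmx. Qed.

Lemma conjmxB m n (V : 'M[F]_(m, n)) f g :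
  conjmx V (f - g) = conjmx V f - conjmx V g.
Proof. by rewrite conjmxD conjmxN. Qed.

Lemma conjmxZ m n (V : 'M[F]_(m, n)) c f : conjmx V (c *: f) = c *: conjmx V f.
Proof. by rewrite /conjmx -scalemxAr -scalemxAl. Qed.

Lemma conjmx_pow m n (V : 'M[F]_(m, n)) f e :
  row_free V -> stablemx V f -> conjmx V (f ^+ e) = conjmx V f ^+ e.
Proof.
move=> rf sf; elim: e => [|e IH]; first by rewrite !expr0 conjmx_scalar.
rewrite !exprS -!mulmxE conjmxM ?IH // inE.
have : forall e, stablemx V (f ^+ e).
  elim=> [|e' IH']; first by rewrite expr0 stablemxC.
  by rewrite exprS -mulmxE stablemxM.
by apply.
Qed.

Lemma conjmx_comm m n (V : 'M[F]_(m, n)) f g :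
  stablemx V f -> stablemx V g ->
  conjmx V (comm f g) = comm (conjmx V f) (conjmx V g).
Proof. by move=> sf sg; rewrite /comm conjmxB !conjmxM. Qed.

Lemma tr_comm m (f g : 'M[F]_m) : \tr (comm f g) = 0.
Proof. by rewrite /comm raddfB /= mxtrace_mulC subrr. Qed.

Variables (d : nat) (w : 'rV[F]_d) (a : 'M[F]_d).

Fixpoint kry i : 'M[F]_d :=
  if i is i'.+1 then (kry i' + <<w *m a ^+ i'>>)%MS else 0.

Lemma kryS i : (kry i <= kry i.+1)%MS.
Proof. exact: addsmxSl. Qed.

Lemma kry_mono i j : (i <= j)%N -> (kry i <= kry j)%MS.
Proof.
move=> /subnK <-; elim: (j - i)%N => [|k IH]; first by rewrite add0n.
by rewrite addSn; apply: submx_trans IH (kryS _).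
Qed.

Lemma kryw i : (w *m a ^+ i <= kry i.+1)%MS.
Proof. by apply: submx_trans (addsmxSr (kry i) _); rewrite genmxE. Qed.

Lemma kry_a i : (kry i *m a <= kry i.+1)%MS.
Proof.
elim: i => [|i IH]; first by rewrite mul0mx sub0mx.
rewrite /= addsmxMr addsmx_sub; apply/andP; split.
  by apply: submx_trans IH (kryS _).
rewrite (eqmxMr _ (genmxE _)) -mulmxA mulmxE -(exprSr a i).
exact: kryw.
Qed.

End Krylov.

Lemma kry_CH (F : fieldType) d (w : 'rV[F]_d) a :
  (0 < d)%N -> (w *m a ^+ d <= kry w a d)%MS.
Proof.
case: d w a => [//|d] w a _.
have CH := Cayley_Hamilton a.
have c1 : (char_poly a)`_d.+1 = 1.
  by have := monicP (char_poly_monic a); rewrite lead_coefE size_char_poly.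
rewrite horner_mx_sum size_char_poly big_ord_recr /= c1 scale1r in CH.
move/eqP: CH; rewrite addrC addr_eq0 => /eqP ->.
rewrite mulmxN eqmx_opp mulmx_sumr; apply: summx_sub => i _.
rewrite -scalemxAr; apply: scalemx_sub.
apply: submx_trans (kryw _ _ _) _; apply: kry_mono.
by case: i => i /=; rewrite ltnS.
Qed.

Section Key.
Variables (F : closedFieldType) (hF : [pchar F] =i pred0).
Variables (d : nat) (K : {vspace 'M[F]_d}) (a : 'M[F]_d) (w : 'rV[F]_d)
  (lam : 'M[F]_d -> F).
Hypotheses (wn0 : w != 0) (hw : forall k, k \in K -> w *m k = lam k *: w)
  (haK : forall k, k \in K -> comm a k \in K).

Let kr := kry w a.

Lemma K3 i k : k \in K -> (w *m a ^+ i *m k - lam k *: (w *m a ^+ i) <= kr i)%MS.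
Proof.
elim: i k => [|i IH] k kK.
  by rewrite expr0 mulmx1 hw // subrr sub0mx.
set u := w *m a ^+ i.
have e : w *m a ^+ i.+1 *m k - lam k *: (w *m a ^+ i.+1) =
   (u *m k - lam k *: u) *m a + (u *m comm a k).
  rewrite exprSr -mulmxE mulmxA -/u /comm mulmxBl -scalemxAl mulmxBr !mulmxA.
  by rewrite [RHS]addrC addrA subrK.
rewrite e; apply: addmx_sub.
  apply: submx_trans (kry_a w a i); exact: submxMr (IH k kK).
have cK := haK kK.
rewrite -(subrK (lam (comm a k) *: u) (u *m comm a k)).
apply: addmx_sub; first exact: submx_trans (IH _ cK) (kryS _ _ _).
by apply: scalemx_sub; apply: kryw.
Qed.

Lemma Kstab i k : k \in K -> (kr i *m k <= kr i)%MS.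
Proof.
move=> kK; elim: i => [|i IH]; first by rewrite mul0mx sub0mx.
rewrite /= addsmxMr addsmx_sub; apply/andP; split.
  by apply: submx_trans IH (kryS _ _ _).
rewrite (eqmxMr _ (genmxE _)).
rewrite -(subrK (lam k *: (w *m a ^+ i)) (w *m a ^+ i *m k)).
apply: addmx_sub; first exact: submx_trans (K3 i kK) (kryS _ _ _).
by apply: scalemx_sub; apply: kryw.
Qed.

Lemma Knil i k : k \in K -> kr i *m (k - (lam k)%:M) ^+ i = 0.
Proof.
move=> kK; set N := k - (lam k)%:M.
have h1 : forall j, (kr j.+1 *m N <= kr j)%MS.
  move=> j; rewrite /= addsmxMr addsmx_sub; apply/andP; split.
    rewrite /N mulmxBr mul_mx_scalar.
    by apply: addmx_sub; [exact: Kstab | rewrite eqmx_opp scalemx_sub].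
  rewrite (eqmxMr _ (genmxE _)) /N mulmxBr mul_mx_scalar.
  exact: K3.
elim: i => [|i IH]; first by rewrite mul0mx.
apply/eqP; rewrite -submx0 exprS -mulmxE mulmxA -IH.
exact: submxMr (h1 i).
Qed.

Lemma wd : (0 < d)%N.
Proof. by have := rank_leq_col w; rewrite rank_rV wn0. Qed.

Lemma rankU : (0 < \rank (kr d))%N.
Proof.
have h : (w <= kr d)%MS.
  apply: submx_trans (kry_mono _ _ wd).
  by have := kryw w a 0; rewrite expr0 mulmx1.
by have := mxrankS h; rewrite rank_rV wn0.
Qed.

Lemma Ustab_a : (kr d *m a <= kr d)%MS.
Proof.
apply: submx_trans (kry_a w a d) _.
rewrite /= addsmx_sub submx_refl genmxE /=.
exact: kry_CH wd.
Qed.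

Lemma trace_formula k : k \in K ->
  \tr (conjmx (row_base (kr d)) k) = lam k *+ \rank (kr d).
Proof.
move=> kK; set U := kr d; set B := row_base U.
have sk : stablemx B k by rewrite stablemx_row_base; exact: Kstab.
have sN : stablemx B (k - (lam k)%:M).
  by rewrite stablemxD // stablemxN stablemxC.
have hz : conjmx B ((k - (lam k)%:M) ^+ d) = 0.
  rewrite /conjmx; apply/eqP; rewrite -submx0.
  have : (B *m (k - (lam k)%:M) ^+ d <= U *m (k - (lam k)%:M) ^+ d)%MS.
    by apply: submxMr; rewrite eq_row_base.
  rewrite Knil // => h; apply: submx_trans (submxMr _ h) _.
  by rewrite mul0mx sub0mx.
rewrite conjmx_pow ?row_base_free // in hz.
have := tr_nilpotent hz.
rewrite conjmxB conjmx_scalar ?row_base_free // raddfB /= mxtrace_scalar.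
by move/eqP; rewrite subr_eq0 => /eqP.
Qed.

Lemma key_lemma k : k \in K -> lam (comm a k) = 0.
Proof.
move=> kK; have cK := haK kK.
have := trace_formula cK.
rewrite conjmx_comm ?stablemx_row_base ?Ustab_a ?Kstab // tr_comm.
move/esym/eqP; rewrite -mulr_natr mulf_eq0 => /orP[/eqP //|].
by move/(pcharf0P _).1: hF => ->; rewrite eqn0Ngt rankU.
Qed.

End Key.


Section LieThm.
Variables (F : closedFieldType) (hF : [pchar F] =i pred0).

Lemma char0_nat (x : F) r : (0 < r)%N -> x *+ r = 0 -> x = 0.
Proof.
move=> r0 /eqP; rewrite -mulr_natr mulf_eq0 => /orP[/eqP //|].
by move/(pcharf0P _).1: hF => ->; rewrite eqn0Ngt r0.
Qed.

Lemma vbasis_ind d (L : {vspace 'M[F]_d}) (P : 'M[F]_d -> Prop) :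
  lclosed P -> (forall x, x \in vbasis L -> P x) -> forall a, a \in L -> P a.
Proof.
move=> cP h a aL; apply: (span_seq_ind cP h).
by rewrite (span_basis (vbasisP L)).
Qed.

Lemma lie_thm k : forall d (L : {vspace 'M[F]_d}), lie L ->
  iter k (@derived F d) L = 0%VS -> (0 < d)%N ->
  exists v : 'rV_d, v != 0 /\ forall a, a \in L -> stablemx v a.
Proof.
elim: k => [|k IH] d L hL hk d0.
  exists (const_mx 1); split.
    apply/negP => /eqP/rowP/(_ (Ordinal d0)).
    by rewrite !mxE => /eqP; rewrite oner_eq0.
  by move=> a; rewrite /= in hk; rewrite hk memv0 => /eqP ->; rewrite stablemx0.
set K := derived L.
have hK : lie K := lie_derived hL.
have hkK : iter k (@derived F d) K = 0%VS by rewrite -iterSr.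
have [v0 [v0n0 hv0]] := IH d K hK hkK d0.
have /existsP [j0 hj0] : [exists j, v0 0 j != 0].
  apply: contraR v0n0 => /existsPn h; apply/eqP/rowP => j.
  by rewrite mxE; apply/eqP; move/negPn: (h j).
pose lam (c : 'M[F]_d) := (v0 *m c) 0 j0 / v0 0 j0.
have hw : forall c, c \in K -> v0 *m c = lam c *: v0.
  move=> c cK; have /sub_rVP [t ht] := hv0 c cK.
  by rewrite /lam ht mxE mulfK.
have KL : (K <= L)%VS := derived_sub hL.
have haK : forall a, a \in L -> forall c, c \in K -> comm a c \in K.
  by move=> a aL c cK; apply: derivedP => //; apply: (subvP KL).
have key : forall a, a \in L -> forall c, c \in K -> lam (comm a c) = 0.
  by move=> a aL c cK; apply: (key_lemma hF v0n0 hw (haK a aL)).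
have lamL : forall t x y, lam (t *: x + y) = t * lam x + lam y.
  by move=> t x y; rewrite /lam mulmxDr -scalemxAr !mxE mulrDl mulrA.
have lam0 : lam 0 = 0 by rewrite /lam mulmx0 mxE mul0r.
pose W := (\bigcap_(i < \dim K) eigenspace (tnth (vbasis K) i) (lam (tnth (vbasis K) i)))%MS.
have Wmem : forall m (A : 'M_(m, d)), (A <= W)%MS ->
    forall c, c \in K -> A *m c = lam c *: A.
  move=> m A /sub_bigcapmxP hA; apply: vbasis_ind.
    split; first by rewrite mulmx0 lam0 scale0r.
    move=> t x y hx hy; rewrite mulmxDr -scalemxAr hx hy lamL.
    by rewrite scalerDl scalerA.
  move=> x /tnthP [i ->]; apply/eigenspaceP; exact: hA.
have v0W : (v0 <= W)%MS.
  apply/sub_bigcapmxP => i _; apply/eigenspaceP; apply: hw.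
  by apply: vbasis_mem; apply: mem_tnth.
have Wstab : forall a, a \in L -> stablemx W a.
  move=> a aL; apply/sub_bigcapmxP => i _; apply/eigenspaceP.
  set b := tnth (vbasis K) i.
  have bK : b \in K by apply: vbasis_mem; apply: mem_tnth.
  have e : a *m b = b *m a + comm a b by rewrite /comm addrC subrK.
  rewrite -mulmxA e mulmxDr mulmxA (Wmem _ W (submx_refl W) b bK).
  rewrite (Wmem _ W (submx_refl W) _ (haK a aL b bK)) key // scale0r addr0.
  by rewrite -scalemxAl.
have r0 : (0 < \rank W)%N by have := mxrankS v0W; rewrite rank_rV v0n0.
have hcomm : forall a b, a \in L -> b \in L ->
    restrictmx W a *m restrictmx W b = restrictmx W b *m restrictmx W a.
  move=> a b aL bL.
  have cK : comm a b \in K by apply: derivedP.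
  have eW : (row_base W <= eigenspace (comm a b) (lam (comm a b)))%MS.
    rewrite eq_row_base; apply/eigenspaceP; exact: Wmem.
  have e1 := conjmx_eigenvalue eW (row_base_free W).
  have e2 : conjmx (row_base W) (comm a b) =
      comm (restrictmx W a) (restrictmx W b).
    by apply: conjmx_comm; rewrite stablemx_row_base; apply: Wstab.
  have : lam (comm a b) = 0.
    apply: (char0_nat r0).
    by rewrite -mxtrace_scalar -e1 e2 tr_comm.
  move=> l0; move: e2; rewrite e1 l0 /comm => /esym/eqP.
  by rewrite raddf0 subr_eq0 => /eqP.
have hAs : {in [seq restrictmx W b | b <- vbasis L] &, forall A B, comm_mx A B}.
  move=> A B /mapP [a aL ->] /mapP [b bL ->].
  by apply: hcomm; apply: vbasis_mem.
have [u un0 /allP hu] := common_eigenvectorF r0 hAs.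
exists (u *m row_base W); split.
  by rewrite mulmx_free_eq0 ?row_base_free.
apply: vbasis_ind.
  split; first exact: stablemx0.
  move=> t x y hx hy; rewrite /= mulmxDr -scalemxAr addmx_sub //.
  exact: scalemx_sub.
move=> x xb; have xL : x \in L by apply: vbasis_mem.
rewrite -stablemx_restrict ?Wstab //.
by apply: hu; apply: map_f.
Qed.

End LieThm.

Section Hyper.
Variables (F : closedFieldType) (hF : [pchar F] =i pred0).

Lemma hyperplane d (L : {vspace 'M[F]_d}) (U : 'M[F]_d) :
  lie L -> (exists k, iter k (@derived F d) L = 0%VS) ->
  (forall a, a \in L -> stablemx U a) -> (0 < \rank U)%N ->
  exists H : 'M[F]_d, [/\ (H <= U)%MS, \rank H = (\rank U).-1 &
                          forall a, a \in L -> stablemx H a].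
Proof.
move=> hL [k hk] hU r0.
set r := \rank U; set B := row_base U.
pose phi (a : 'M[F]_d) : 'M[F]_r := (conjmx B a)^T.
have phiL : forall t x y, phi (t *: x + y) = t *: phi x + phi y.
  by move=> t x y; rewrite /phi conjmxD conjmxZ linearD linearZ.
have phi0 : phi 0 = 0 by rewrite /phi conjmx0 trmx0.
have phicomm : forall a1 a2, a1 \in L -> a2 \in L ->
    comm (phi a1) (phi a2) = phi (comm a2 a1).
  move=> a1 a2 h1 h2; rewrite /phi conjmx_comm ?stablemx_row_base ?hU //.
  by rewrite /comm linearB /= !trmx_mul.
pose Phi (X : {vspace 'M[F]_d}) :=
  vspan (fun c => exists a, a \in X /\ c = phi a).
have PhiP : forall X c, c \in Phi X -> exists a, a \in X /\ c = phi a.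
  move=> X c; apply: (@vspan_ind _ _ _ (fun c => exists a, a \in X /\ c = phi a)).
    split; first by exists 0; rewrite mem0v phi0.
    move=> t x y [a [aX ->]] [b [bX ->]].
    by exists (t *: a + b); rewrite phiL memvD ?memvZ.
  by [].
have Phi_mono : forall X Y, (X <= Y)%VS -> (Phi X <= Phi Y)%VS.
  move=> X Y /subvP XY; apply: vspan_min => c [a [aX ->]].
  by apply: vspan_sub; exists a; split => //; apply: XY.
have Phi_der : forall X, (X <= L)%VS -> (derived (Phi X) <= Phi (derived X))%VS.
  move=> X /subvP XL; apply: derived_min.
  apply: (comm_span (@vspan_min _ _ _)) => _ _ [a1 [h1 ->]] [a2 [h2 ->]].
  rewrite phicomm ?XL //; apply: vspan_sub; exists (comm a2 a1); split => //.
  exact: derivedP.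
have lieP : lie (Phi L).
  move=> c1 c2; apply: (comm_span (@vspan_min _ _ _)) => _ _ [a1 [h1 ->]] [a2 [h2 ->]].
  rewrite phicomm //; apply: vspan_sub; exists (comm a2 a1); split => //.
  exact: hL.
have iterP : forall j, (iter j (@derived F r) (Phi L) <= Phi (iter j (@derived F d) L))%VS.
  elim=> [|j IH] /=; first exact: subvv.
  apply: subv_trans (derived_mono IH) _.
  by apply: Phi_der; apply: iter_sub.
have hk' : iter k (@derived F r) (Phi L) = 0%VS.
  apply/eqP; rewrite -subv0; apply: subv_trans (iterP k) _.
  rewrite hk; apply: vspan_min => c [a [a0 ->]].
  by rewrite memv0 in a0; move/eqP: a0 => ->; rewrite phi0 mem0v.
have [x [xn0 hx]] := lie_thm hF lieP hk' r0.
exists <<kermx x^T *m B>>%MS; split.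
- rewrite genmxE; by apply: submx_trans (submxMl _ _) _; rewrite eq_row_base.
- by rewrite genmxE mxrankMfree ?row_base_free // mxrank_ker mxrank_tr rank_rV xn0 subn1.
move=> a aL.
rewrite (eqmx_stable _ (genmxE _)) -stablemx_restrict ?hU //.
have /sub_rVP [mu hmu] : stablemx x (phi a).
  by apply: hx; apply: vspan_sub; exists a.
have e : conjmx B a *m x^T = mu *: x^T.
  by rewrite -[conjmx B a]trmxK -trmx_mul -/(phi a) hmu linearZ.
rewrite sub_kermx -mulmxA e -scalemxAr mulmx_ker scaler0 //.
Qed.

End Hyper.

Import VectorInternalTheory.

Section Basics.
Variables (F : fieldType) (V : vectType F) (n : nat).

Lemma upd_eq (x : {ffun 'I_n -> V}) i u : upd x i u i = u.
Proof. by rewrite /upd ffunE eqxx. Qed.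

Lemma upd_neq (x : {ffun 'I_n -> V}) i j u : j != i -> upd x i u j = x j.
Proof. by move=> h; rewrite /upd ffunE (negbTE h). Qed.

Lemma upd_id (x : {ffun 'I_n -> V}) i : upd x i (x i) = x.
Proof. by apply/ffunP => j; rewrite /upd ffunE; case: eqP => // ->. Qed.

Lemma upd_upd (x : {ffun 'I_n -> V}) i u v : upd (upd x i u) i v = upd x i v.
Proof. by apply/ffunP => j; rewrite /upd !ffunE; case: eqP. Qed.

Lemma upd_comm (x : {ffun 'I_n -> V}) i j u v : i != j ->
  upd (upd x i u) j v = upd (upd x j v) i u.
Proof.
move=> hij; apply/ffunP => k; rewrite /upd !ffunE.
have hji : j != i by rewrite eq_sym.
have [->|hkj] := eqVneq k j; first by rewrite (negbTE hji).
by [].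
Qed.

Definition swapf (x : {ffun 'I_n -> V}) (i j : 'I_n) : {ffun 'I_n -> V} :=
  [ffun k => x (if k == i then j else if k == j then i else k)].

Lemma swapf_id (x : {ffun 'I_n -> V}) i : swapf x i i = x.
Proof. by apply/ffunP => k; rewrite /swapf ffunE; case: eqP => [->|]. Qed.

Lemma mem_v2r_mx2vs m (M : 'M[F]_(m, dim V)) v : (v \in mx2vs M) = (v2r v <= M)%MS.
Proof. by rewrite memvE /subsetv /vline !mx2vsK. Qed.

Lemma dim_mx2vs m (M : 'M[F]_(m, dim V)) : \dim (mx2vs M) = \rank M.
Proof. by rewrite /dimv mx2vsK. Qed.

Lemma sub_mx2vs m1 m2 (M1 : 'M[F]_(m1, dim V)) (M2 : 'M[F]_(m2, dim V)) :
  (mx2vs M1 <= mx2vs M2)%VS = (M1 <= M2)%MS.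
Proof. by rewrite /subsetv !mx2vsK. Qed.

End Basics.

Section Poisson.
Variables (F : fieldType) (V : vectType F) (n : nat) (hn : (2 <= n)%N).
Variables (mul : V -> V -> V) (brk : {ffun 'I_n -> V} -> V).
Hypothesis hP : poisson_nlie mul brk.
Implicit Types (x : {ffun 'I_n -> V}) (i j : 'I_n).

Lemma mulDl a (x y z : V) : mul (a *: x + y) z = a *: mul x z + mul y z.
Proof. by case: hP => [[]]. Qed.
Lemma mulC (x y : V) : mul x y = mul y x.
Proof. by case: hP => [[]]. Qed.
Lemma mulA (x y z : V) : mul x (mul y z) = mul (mul x y) z.
Proof. by case: hP => [[]]. Qed.
Lemma brkL x i a u v :
  brk (upd x i (a *: u + v)) = a *: brk (upd x i u) + brk (upd x i v).
Proof. by case: hP => _ h. Qed.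
Lemma brk_skew x i j : i != j -> brk (swapf x i j) = - brk x.
Proof. by case: hP => _ _ h _ _; apply: h. Qed.
Lemma brk_fi x (y : {ffun 'I_n -> V}) (l : 'I_n) : val l = n.-1 ->
  brk (upd x l (brk y)) = \sum_(i < n) brk (upd y i (brk (upd x l (y i)))).
Proof. by case: hP => _ _ _ h _; apply: h. Qed.
Lemma brk_leib x (i0 : 'I_n) : val i0 = 0%N -> forall y z : V,
  brk (upd x i0 (mul y z)) = mul y (brk (upd x i0 z)) + mul z (brk (upd x i0 y)).
Proof. by case: hP => _ _ _ _ h; apply: h. Qed.

Lemma mulDr a (x y z : V) : mul z (a *: x + y) = a *: mul z x + mul z y.
Proof. by rewrite mulC mulDl !(mulC z). Qed.

Lemma mul0r' (x : V) : mul 0 x = 0.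
Proof.
have := mulDl 1 0 0 x; rewrite !scale1r addr0 => /esym/eqP.
by rewrite -subr_eq0 addrK => /eqP.
Qed.
Lemma mulr0' (x : V) : mul x 0 = 0.
Proof. by rewrite mulC mul0r'. Qed.
Lemma mulrN' (x y : V) : mul x (- y) = - mul x y.
Proof.
apply/eqP; rewrite -subr_eq0 opprK.
by rewrite -[mul x (- y)]scale1r -mulDr scale1r addNr mulr0'.
Qed.

Lemma brk0 x i : brk (upd x i 0) = 0.
Proof.
have := brkL x i 1 0 0; rewrite !scale1r addr0 => /esym/eqP.
by rewrite -subr_eq0 addrK => /eqP.
Qed.

Lemma brk_slot0 (x : {ffun 'I_n -> V}) i : x i = 0 -> brk x = 0.
Proof. by move=> h; rewrite -(upd_id x i) h brk0. Qed.

Lemma n_gt0 : (0 < n)%N. Proof. exact: leq_trans hn. Qed.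
Lemma lo_lt : (n.-1 < n)%N. Proof. by rewrite ltn_predL n_gt0. Qed.
Definition lo : 'I_n := Ordinal lo_lt.
Definition z0 : 'I_n := Ordinal n_gt0.
Definition z1 : 'I_n := Ordinal hn.

Lemma lo_val : val lo = n.-1. Proof. by []. Qed.
Lemma lo_z0 : lo != z0.
Proof. by apply/eqP => /(congr1 val) /=; case: n hn => [|[|k]]. Qed.
Lemma z0_z1 : z0 != z1. Proof. by []. Qed.

Definition A x u := brk (upd x lo u).
Definition Lm p u : V := mul p u.

Lemma AL x a u v : A x (a *: u + v) = a *: A x u + A x v.
Proof. exact: brkL. Qed.
Lemma A0 x : A x 0 = 0. Proof. exact: brk0. Qed.

Lemma swap_mem (W : {vspace V}) x i j : (brk (swapf x i j) \in W) = (brk x \in W).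
Proof.
case: (eqVneq i j) => [->|hij]; first by rewrite swapf_id.
by rewrite brk_skew // memvN.
Qed.

Lemma slot_any (W : {vspace V}) :
  (forall y u, u \in W -> A y u \in W) -> forall x i, x i \in W -> brk x \in W.
Proof.
move=> hW x i xi; rewrite -(swap_mem W x i lo).
rewrite -(upd_id (swapf x i lo) lo); apply: hW.
rewrite /swapf ffunE eqxx; case: eqP => [h|_] //; by rewrite h.
Qed.

Lemma swap_upd_lo x u :
  swapf (upd x lo u) z0 lo = upd (swapf x z0 lo) z0 u.
Proof.
apply/ffunP => k; rewrite /swapf /upd !ffunE.
have hl := lo_z0; have hl' : z0 != lo by rewrite eq_sym.
case: (eqVneq k z0) => [_|hk0]; first by rewrite eqxx.
case: (eqVneq k lo) => [_|hkl] /=; first by rewrite (negbTE hl').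
by rewrite ?(negbTE hkl).
Qed.

Lemma leib_lo x (y z : V) :
  A x (mul y z) = mul y (A x z) + mul z (A x y).
Proof.
have e : forall u, A x u = - brk (upd (swapf x z0 lo) z0 u).
  by move=> u; rewrite -swap_upd_lo brk_skew ?opprK // eq_sym lo_z0.
by rewrite !e brk_leib // !mulrN' opprD.
Qed.

Lemma fi_op x (y : {ffun 'I_n -> V}) (u : V) :
  A x (A y u) = A y (A x u) + \sum_(i < n | i != lo) A (upd y i (A x (y i))) u.
Proof.
rewrite /A (brk_fi x (upd y lo u) lo_val) (bigD1 lo) //= upd_eq upd_upd.
congr (_ + _); apply: eq_bigr => i hi.
by rewrite upd_neq // upd_comm // eq_sym.
Qed.

Section DSeries.
Variables (D : nat -> {vspace V}) (hD1 : D 1%N = fullv)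
  (hDs : forall k, (0 < k)%N -> is_span (derived_gens mul brk (D k)) (D k.+1)).

Lemma gen_brk k (z : {ffun 'I_n -> V}) : (0 < k)%N ->
  (forall i : 'I_n, (val i < 2)%N -> z i \in D k) -> brk z \in D k.+1.
Proof. by move=> k0 h; apply: (hDs k0).1; left; exists z. Qed.

Lemma gen_mul k a b : (0 < k)%N -> a \in D k -> b \in D k -> mul a b \in D k.+1.
Proof. by move=> k0 ha hb; apply: (hDs k0).1; right; exists a, b. Qed.

Lemma D_props k : (forall y u, u \in D k.+1 -> A y u \in D k.+1) /\
  (D k.+2 <= D k.+1)%VS.
Proof.
elim: k => [|k [IHa IHb]].
  by rewrite hD1; split => [y u _|]; [exact: memvf | exact: subvf].
have ideal2 : forall y u, u \in D k.+2 -> A y u \in D k.+2.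
  move=> y; apply: (span_ind (hDs (isT : (0 < k.+1)%N)).2
     (P := fun u => A y u \in D k.+2)).
    by split; [rewrite A0 mem0v | move=> a u v hu hv; rewrite AL memvD ?memvZ].
  move=> v [[z [hz ->]]|[a [b [ha hb ->]]]].
    rewrite /A (brk_fi _ _ lo_val); apply: memv_suml => t _.
    apply: gen_brk => // i hi; rewrite /upd ffunE.
    case: eqP => [e|_]; last exact: hz.
    by apply: IHa; apply: hz; rewrite -e.
  by rewrite leib_lo memvD // gen_mul // IHa.
split => //.
apply: (hDs (isT : (0 < k.+2)%N)).2 => v [[z [hz ->]]|[a [b [ha hb ->]]]].
  by apply: (slot_any ideal2 (i := z0)); apply: hz.
by apply: gen_mul => //; apply: (subvP IHb).
Qed.

Lemma D_ideal k : (0 < k)%N -> forall y u, u \in D k -> A y u \in D k.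
Proof. by case: k => // k _; apply: (D_props k).1. Qed.

Lemma D_slot k : (0 < k)%N -> forall x i, x i \in D k -> brk x \in D k.
Proof. by move=> k0; apply: slot_any; apply: D_ideal. Qed.

Lemma D_two k : (0 < k)%N -> forall x i j, i != j -> x i \in D k -> x j \in D k ->
  brk x \in D k.+1.
Proof.
move=> k0 x i j hij hi hj.
set y := swapf x i z0.
set j' := if j == z0 then i else j.
have j'0 : j' != z0.
  rewrite /j'; case: (eqVneq j z0) => [e|//]; by rewrite -e.
rewrite -(swap_mem _ x i z0) -/y -(swap_mem _ y j' z1).
have w0 : swapf y j' z1 z0 = x i.
  rewrite /swapf /y !ffunE (eq_sym z0 j') (negbTE j'0) (negbTE z0_z1) eqxx.
  by case: eqP => // ->.
have w1 : swapf y j' z1 z1 = x j.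
  rewrite /swapf /y !ffunE eqxx.
  case: (eqVneq z1 j') => [->|_]; rewrite /j';
  by case: (eqVneq j z0) => [->|hj0]; rewrite ?eqxx // (negbTE hj0) eq_sym (negbTE hij).
apply: gen_brk => // t ht.
have : t = z0 \/ t = z1.
  case: t ht => [[|[|t']] ht] ht2 //=; [left|right]; exact: val_inj.
by case=> ->; rewrite ?w0 ?w1.
Qed.

End DSeries.

Definition mx (f : V -> V) : 'M[F]_(dim V) :=
  \matrix_(i, j) v2r (f (r2v (delta_mx 0 i))) 0 j.
Definition islin (f : V -> V) := forall a u v, f (a *: u + v) = a *: f u + f v.

Lemma mxP f : islin f -> forall v, v2r v *m mx f = v2r (f v).
Proof.
move=> hf v.
have f0 : f 0 = 0.
  have := hf 1 0 0; rewrite !scale1r addr0 => /esym/eqP.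
  by rewrite -subr_eq0 addrK => /eqP.
have fD : forall u w, f (u + w) = f u + f w.
  by move=> u w; have := hf 1 u w; rewrite !scale1r.
have fZ : forall a u, f (a *: u) = a *: f u.
  by move=> a u; rewrite -[a *: u]addr0 hf f0 addr0.
rewrite -[in RHS](v2rK v) [in RHS](row_sum_delta (v2r v)) linear_sum.
rewrite (big_morph f fD f0) linear_sum.
apply/rowP => j; rewrite !mxE summxE; apply: eq_bigr => i _.
by rewrite linearZ fZ linearZ !mxE.
Qed.

Lemma mx_ext (X Y : 'M[F]_(dim V)) :
  (forall v, v2r v *m X = v2r v *m Y) -> X = Y.
Proof.
move=> h; apply/row_matrixP => i; rewrite !rowE.
by rewrite -(r2vK (delta_mx 0 i)) h.
Qed.

Lemma islinA x : islin (A x). Proof. exact: AL. Qed.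
Lemma islinL p : islin (Lm p). Proof. by move=> a u v; apply: mulDr. Qed.

Lemma comm_AA x y : comm (mx (A x)) (mx (A y)) =
  - \sum_(i < n | i != lo) mx (A (upd y i (A x (y i)))).
Proof.
apply: mx_ext => v.
rewrite /comm mulmxBr !mulmxA !(mxP (islinA x)) !(mxP (islinA y)) (mxP (islinA x)).
rewrite (fi_op x y v) linearD opprD addrA subrr add0r.
rewrite mulmxN mulmx_sumr linear_sum; congr (- _); apply: eq_bigr => i _.
by rewrite (mxP (islinA _)).
Qed.

Lemma comm_AL x p : comm (mx (A x)) (mx (Lm p)) = - mx (Lm (A x p)).
Proof.
apply: mx_ext => v.
rewrite /comm mulmxBr !mulmxA !(mxP (islinA x)) !(mxP (islinL p)) (mxP (islinA x)).
rewrite mulmxN (mxP (islinL _)).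
by rewrite /Lm leib_lo linearD opprD addrA subrr add0r mulC.
Qed.

Lemma comm_LL p q : comm (mx (Lm p)) (mx (Lm q)) = 0.
Proof.
apply: mx_ext => v.
rewrite /comm mulmxBr !mulmxA !(mxP (islinL p)) !(mxP (islinL q)) (mxP (islinL p)).
by rewrite mulmx0 /Lm !mulA (mulC q p) subrr.
Qed.

Section Solv.
Variables (D : nat -> {vspace V}) (hD1 : D 1%N = fullv)
  (hDs : forall k, (0 < k)%N -> is_span (derived_gens mul brk (D k)) (D k.+1)).

Definition G (T : 'M[F]_(dim V)) :=
  (exists x, T = mx (A x)) \/ (exists p, T = mx (Lm p)).
Definition g := vspan G.

Lemma G_A x : mx (A x) \in g.
Proof. by apply: vspan_sub; left; exists x. Qed.
Lemma G_L p : mx (Lm p) \in g.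
Proof. by apply: vspan_sub; right; exists p. Qed.

Lemma lie_g : lie g.
Proof.
apply: (comm_span (@vspan_min _ _ G)) => _ _ [[x ->]|[p ->]] [[y ->]|[q ->]].
- by rewrite comm_AA memvN; apply: memv_suml => i _; apply: G_A.
- by rewrite comm_AL memvN; apply: G_L.
- by rewrite commN comm_AL opprK; apply: G_L.
- by rewrite comm_LL mem0v.
Qed.

Definition Y k := vspan (fun T =>
  (exists x i, [/\ i != lo, x i \in D k & T = mx (A x)]) \/
  (exists p, p \in D k /\ T = mx (Lm p))).
Definition Z k := vspan (fun T =>
  (exists x, (forall u, A x u \in D k.+1) /\ T = mx (A x)) \/
  (exists p, p \in D k /\ T = mx (Lm p))).

Lemma g_Y1 : (g <= Y 1)%VS.
Proof.
apply: vspan_min => T [[x ->]|[p ->]]; apply: vspan_sub.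
  by left; exists x, z0; split => //; [rewrite eq_sym lo_z0 | rewrite hD1 memvf].
by right; exists p; rewrite hD1 memvf.
Qed.

Lemma Y_Z k : (0 < k)%N -> (derived (Y k) <= Z k)%VS.
Proof.
move=> k0; have k1 : (0 < k.+1)%N by [].
apply: derived_min.
apply: (comm_span (@vspan_min _ _ _)) =>
  _ _ [[x [i [hi xi ->]]]|[p [hp ->]]] [[y [j [hj yj ->]]]|[q [hq ->]]].
- rewrite comm_AA memvN; apply: memv_suml => t ht.
  apply: vspan_sub; left; eexists; split; last by reflexivity.
  move=> u; rewrite /A.
  case: (eqVneq t j) => [->|htj].
    apply: (D_slot hD1 hDs k1 (i := j)).
    rewrite upd_neq // upd_eq.
    apply: (D_two hDs k0 (i := i) (j := lo)) => //.
      by rewrite upd_neq.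
    by rewrite upd_eq.
  apply: (D_two hDs k0 (i := j) (j := t)) => //; first by rewrite eq_sym.
    by rewrite upd_neq // upd_neq // eq_sym.
  rewrite upd_neq // upd_eq.
  by apply: (D_slot hD1 hDs k0 (i := i)); rewrite upd_neq.
- rewrite comm_AL memvN; apply: vspan_sub; right; eexists; split; last by reflexivity.
  by apply: (D_slot hD1 hDs k0 (i := i)); rewrite upd_neq.
- rewrite commN comm_AL opprK; apply: vspan_sub; right; eexists; split; last by reflexivity.
  exact: (D_ideal hD1 hDs k0).
- by rewrite comm_LL mem0v.
Qed.

Lemma Z_Y k : (0 < k)%N -> (derived (Z k) <= Y k.+1)%VS.
Proof.
move=> k0; apply: derived_min.
apply: (comm_span (@vspan_min _ _ _)) =>
  _ _ [[x [hx ->]]|[p [hp ->]]] [[y [hy ->]]|[q [hq ->]]].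
- rewrite comm_AA memvN; apply: memv_suml => t ht.
  apply: vspan_sub; left; exists (upd y t (A x (y t))), t; split => //.
  by rewrite upd_eq.
- rewrite comm_AL memvN; apply: vspan_sub; right; eexists; split; last by reflexivity.
  exact: hx.
- rewrite commN comm_AL opprK; apply: vspan_sub; right; eexists; split; last by reflexivity.
  exact: hy.
- by rewrite comm_LL mem0v.
Qed.

Lemma Y_s s : D s = 0%VS -> Y s = 0%VS.
Proof.
move=> hs; apply/eqP; rewrite -subv0; apply: vspan_min => T.
rewrite memv0 => -[[x [i [hi xi ->]]]|[p [hp ->]]]; apply/eqP.
  rewrite hs memv0 in xi.
  apply: mx_ext => v; rewrite (mxP (islinA x)) mulmx0 /A.
  rewrite (brk_slot0 (i := i)) ?linear0 //.
  by rewrite upd_neq // (eqP xi).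
rewrite hs memv0 in hp.
apply: mx_ext => v; rewrite (mxP (islinL p)) mulmx0 /Lm (eqP hp) mul0r'.
by rewrite linear0.
Qed.

Lemma g_solv s : (0 < s)%N -> D s = 0%VS ->
  iter (2 * s.-1) (@derived F (dim V)) g = 0%VS.
Proof.
move=> s0 hs.
have h : forall j : nat, (iter (2 * j) (@derived F (dim V)) g <= Y j.+1)%VS.
  elim=> [|j IH]; first by rewrite muln0 /=; exact: g_Y1.
  rewrite mulnS !addSn add0n /=.
  apply: subv_trans (derived_mono (derived_mono IH)) _.
  apply: subv_trans (derived_mono (Y_Z _)) _ => //.
  exact: Z_Y.
apply/eqP; rewrite -subv0; apply: subv_trans (h s.-1) _.
by rewrite prednK // Y_s.
Qed.

End Solv.

End Poisson.

Theorem corollary5p8 (F : closedFieldType) (hF : [pchar F] =i pred0)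
  (V : vectType F) (n m : nat) (hn : (2 <= n)%N)
  (mul : V -> V -> V) (brk : {ffun 'I_n -> V} -> V)
  (hP : poisson_nlie mul brk) (hsolv : solvable_pnlie mul brk)
  (hdim : \dim (fullv : {vspace V})%VS = m) :
  exists P : nat -> {vspace V},
    [/\ P 0%N = 0%VS, P m = fullv%VS,
        forall i, (i <= m)%N -> is_ideal mul brk (P i) /\ \dim (P i) = i &
        forall i, (i < m)%N -> (P i <= P i.+1)%VS].
Proof.
case: hsolv => D [[hD1 hDs] [s [s0 hDs0]]].
rewrite dimvf in hdim; subst m.
set gg := g hn mul brk.
have lg : lie gg := lie_g hP.
have sg : exists k, iter k (@derived F (dim V)) gg = 0%VS.
  by exists (2 * s.-1)%N; apply: (g_solv hn hP hD1 hDs s0 hDs0).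
pose stab (U : 'M[F]_(dim V)) := forall a, a \in gg -> stablemx U a.
have hyp : forall U : 'M[F]_(dim V), exists H : 'M[F]_(dim V),
    stab U -> (0 < \rank U)%N ->
    [/\ (H <= U)%MS, \rank H = (\rank U).-1 & stab H].
  move=> U; case: (classic (stab U /\ (0 < \rank U)%N)) => [[hU r0]|hn'].
    by have [H hH] := hyperplane hF lg sg hU r0; exists H.
  by exists U => hU r0; exfalso; apply: hn'.
pose hf U := proj1_sig (constructive_indefinite_description _ (hyp U)).
have hfP : forall U, stab U -> (0 < \rank U)%N ->
    [/\ (hf U <= U)%MS, \rank (hf U) = (\rank U).-1 & stab (hf U)].
  by move=> U; apply: (proj2_sig (constructive_indefinite_description _ (hyp U))).
pose Q j := iter j hf 1%:M.
have QP : forall j, (j <= dim V)%N -> stab (Q j) /\ \rank (Q j) = (dim V - j)%N.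
  elim=> [|j IH] hj.
    by split; [move=> a _; exact: submx1 | rewrite /Q /= mxrank1 subn0].
  have [st rk] := IH (ltnW hj).
  have r0 : (0 < \rank (Q j))%N by rewrite rk subn_gt0.
  have [_ rk' st'] := hfP _ st r0.
  by split => //=; rewrite rk' rk subnS.
have Qsub : forall j, (j < dim V)%N -> (Q j.+1 <= Q j)%MS.
  move=> j hj; have [st rk] := QP j (ltnW hj).
  have r0 : (0 < \rank (Q j))%N by rewrite rk subn_gt0.
  by have [] := hfP _ st r0.
pose P i := mx2vs (Q (dim V - i)%N).
have Pstab : forall i, (i <= dim V)%N -> forall y u, u \in P i -> A hn brk y u \in P i.
  move=> i hi y u; rewrite !mem_v2r_mx2vs -(mxP (islinA hn hP y)) => hu.
  apply: submx_trans (submxMr _ hu) _.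
  by apply: (QP _ (leq_subr _ _)).1; apply: G_A.
exists P; split.
- apply/eqP; rewrite -dimv_eq0 /P subn0 dim_mx2vs (QP _ (leqnn _)).2 subnn //.
- by rewrite /P subnn.
- move=> i hi; split; last first.
    by rewrite /P dim_mx2vs (QP _ (leq_subr _ _)).2 subKn.
  split.
    move=> p u; rewrite !mem_v2r_mx2vs => hu.
    rewrite -[mul p u]/(Lm mul p u) -(mxP (islinL hP p)).
    apply: submx_trans (submxMr _ hu) _.
    by apply: (QP _ (leq_subr _ _)).1; apply: G_L.
  move=> x i0 hi0 u hu.
  apply: (slot_any hP (Pstab i hi) (i := i0)).
  by rewrite upd_eq.
- move=> i hi; rewrite /P sub_mx2vs -subnSK //.
  by apply: Qsub; rewrite ltn_subrL /=; apply: leq_ltn_trans hi.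
Qed.
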